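(* For every semiframe $(X,\le,\ast)$, the semitopology $\mathrm{St}(X,\le,\ast)$ is sober.
   Context: A semiframe is a triple $(X,\le,\ast)$ where $(X,\le)$ is a complete join-semilattice and $\ast\subseteq X\times X$ is commutative, satisfies $x\ast x$ for every $x\neq\bot_X=\bigvee\varnothing$, and $x\ast\bigvee Y$ iff $x\ast y$ for some $y\in Y$. An abstract point is a nonempty, up-closed subset $F\subseteq X$ with $y\ast y'$ for all $y,y'\in F$ that is completely prime ($\bigvee Y\in F$ implies $y\in F$ for some $y\in Y$, for every $Y\subseteq X$ including $\varnothing$). $\mathrm{Op}(x)$ is the set of abstract points containing $x$. $\mathrm{St}(X,\le,\ast)$ is the semitopology whose points are the abstract points and whose open sets are the sets $\mathrm{Op}(x)$, $x\in X$. A semitopology is a set $\mathsf P$ with $\mathcal O\subseteq\mathcal P(\mathsf P)$ containing $\varnothing,\mathsf P$ and closed under arbitrary unions; $(\mathcal O,\subseteq,\between)$ (with $O\between O'$ iff $O\cap O'\neq\varnothing$) is a semiframe. $(\mathsf P,\mathcal O)$ is sober when the map $p\mapsto\mathrm{nbhd}(p)=\{O\in\mathcal O\mid p\in O\}$ is a bijection from $\mathsf P$ onto the set of abstract points of $(\mathcal O,\subseteq,\between)$. *)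

(* Defs.v *)
Record Semiframe := {
  sf_car :> Type;
  sf_le : sf_car -> sf_car -> Prop;
  sf_join : (sf_car -> Prop) -> sf_car;
  sf_ast : sf_car -> sf_car -> Prop;
  sf_le_refl : forall x, sf_le x x;
  sf_le_trans : forall x y z, sf_le x y -> sf_le y z -> sf_le x z;
  sf_le_antisym : forall x y, sf_le x y -> sf_le y x -> x = y;
  sf_join_ub : forall (Y : sf_car -> Prop) y, Y y -> sf_le y (sf_join Y);
  sf_join_least : forall (Y : sf_car -> Prop) z,
      (forall y, Y y -> sf_le y z) -> sf_le (sf_join Y) z;
  sf_ast_comm : forall x y, sf_ast x y -> sf_ast y x;
  sf_ast_refl : forall x, x <> sf_join (fun _ => False) -> sf_ast x x;
  sf_ast_join : forall x (Y : sf_car -> Prop),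
      sf_ast x (sf_join Y) <-> exists y, Y y /\ sf_ast x y
}.

Definition abstract_point {A : Type} (le : A -> A -> Prop)
  (join : (A -> Prop) -> A) (ast : A -> A -> Prop) (F : A -> Prop) : Prop :=
  (exists x, F x) /\
  (forall x y, F x -> le x y -> F y) /\
  (forall x y, F x -> F y -> ast x y) /\
  (forall Y : A -> Prop, F (join Y) -> exists y, Y y /\ F y).

Record Semitopology := {
  st_pts :> Type;
  st_open : (st_pts -> Prop) -> Prop;
  st_open_empty : st_open (fun _ => False);
  st_open_full : st_open (fun _ => True);
  st_open_union : forall S : (st_pts -> Prop) -> Prop,
      (forall U, S U -> st_open U) -> st_open (fun p => exists U, S U /\ U p)
}.

Section OpensSemiframe.
Variable T : Semitopology.

Definition opens := { U : T -> Prop | st_open T U }.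

Definition opens_le (U V : opens) : Prop :=
  forall p, proj1_sig U p -> proj1_sig V p.

Definition opens_between (U V : opens) : Prop :=
  exists p, proj1_sig U p /\ proj1_sig V p.

Definition opens_join (Y : opens -> Prop) : opens :=
  exist _ (fun p => exists V, (exists U : opens, Y U /\ proj1_sig U = V) /\ V p)
    (st_open_union T (fun V => exists U : opens, Y U /\ proj1_sig U = V)
       (fun V HV => match HV with
                    | ex_intro _ U (conj _ e) =>
                        match e in _ = W return st_open T W with
                        | eq_refl => proj2_sig U end end)).

Definition nbhd (p : T) : opens -> Prop := fun U => proj1_sig U p.

(** Sober: p |-> nbhd p is a bijection from the points onto the abstract
    points of (O, ⊆, ≬). *)
Definition sober : Prop :=
  (forall p : T, abstract_point opens_le opens_join opens_between (nbhd p)) /\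
  (forall p q : T, (forall U, nbhd p U <-> nbhd q U) -> p = q) /\
  (forall F : opens -> Prop,
      abstract_point opens_le opens_join opens_between F ->
      exists p : T, forall U, F U <-> nbhd p U).
End OpensSemiframe.

Section St.
Variable X : Semiframe.

Definition apoint := { F : X -> Prop | abstract_point (sf_le X) (sf_join X) (sf_ast X) F }.

Definition Op (x : X) : apoint -> Prop := fun P => proj1_sig P x.

Definition St_open (U : apoint -> Prop) : Prop :=
  exists x : X, forall P, U P <-> Op x P.

Lemma St_open_empty : St_open (fun _ => False).
Proof.
  exists (sf_join X (fun _ => False)); intros P; destruct (proj2_sig P) as [_ [_ [_ Hp]]]; unfold Op.
  split; [tauto|]. intros H. destruct (Hp _ H) as [y [[] _]].
Qed.

Lemma St_open_full : St_open (fun _ => True).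
Proof.
  exists (sf_join X (fun _ => True)); intros P; destruct (proj2_sig P) as [[x Hx] [Hup _]]; unfold Op.
  split; [|tauto]. intros _. apply (Hup x); [exact Hx|]. apply sf_join_ub; exact I.
Qed.

Lemma St_open_union : forall S : (apoint -> Prop) -> Prop,
  (forall U, S U -> St_open U) -> St_open (fun p => exists U, S U /\ U p).
Proof.
  intros S HS.
  exists (sf_join X (fun x => exists U, S U /\ forall P, U P <-> Op x P)).
  intros P. split.
  - intros [U [SU UP]]. destruct (HS U SU) as [x Hx].
    pose proof (proj1 (Hx _) UP) as Fx. unfold Op in *.
    destruct (proj2_sig P) as [_ [Hup _]].
    apply (Hup x); [exact Fx|]. apply sf_join_ub. exists U; split; [exact SU|].
    exact Hx.
  - intros H. unfold Op in H. destruct (proj2_sig P) as [_ [_ [_ Hp]]]. destruct (Hp _ H) as [y [[U [SU HU]] Fy]].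
    exists U; split; [exact SU|]. apply (proj2 (HU _)). unfold Op. exact Fy.
Qed.

Definition St : Semitopology :=
  {| st_pts := apoint; st_open := St_open;
     st_open_empty := St_open_empty; st_open_full := St_open_full;
     st_open_union := St_open_union |}.
End St.

(* Main.v *)
Require Import Defs.
From Stdlib Require Import ProofIrrelevance FunctionalExtensionality PropExtensionality.

Section P.
Variable X : Semiframe.

Definition OpO (x : X) : opens (St X) :=
  exist (fun U => St_open X U) (Op X x) (ex_intro _ x (fun P => iff_refl _)).

Lemma Op_mono (x y : X) : sf_le X x y -> opens_le (St X) (OpO x) (OpO y).
Proof.
  intros Hxy P HP. simpl in *. unfold Op in *.
  destruct (proj2_sig P) as [_ [Hup _]]. exact (Hup x y HP Hxy).
Qed.

Lemma part1 : forall p : St X,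
  abstract_point (opens_le (St X)) (opens_join (St X)) (opens_between (St X)) (nbhd (St X) p).
Proof.
  intros p. split; [|split; [|split]].
  - exists (exist (fun U => St_open X U) (fun _ => True) (St_open_full X)).
    unfold nbhd; simpl; exact I.
  - intros U V HU HUV. unfold nbhd in *. apply HUV. exact HU.
  - intros U V HU HV. exists p. split; assumption.
  - intros Y HY. unfold nbhd in HY. simpl in HY.
    destruct HY as [V [[U [YU e]] Vp]]. subst V.
    exists U. split; assumption.
Qed.

Lemma part2 : forall p q : St X,
  (forall U, nbhd (St X) p U <-> nbhd (St X) q U) -> p = q.
Proof.
  intros p q H.
  destruct p as [F HF]; destruct q as [G HG].
  assert (E : F = G).
  { extensionality x. apply propositional_extensionality.
    exact (H (OpO x)). }
  subst G. f_equal. apply proof_irrelevance.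
Qed.

Section Part3.
Variable F : opens (St X) -> Prop.
Hypothesis HF : abstract_point (opens_le (St X)) (opens_join (St X)) (opens_between (St X)) F.

Definition G (x : X) : Prop := F (OpO x).

Lemma G_ap : abstract_point (sf_le X) (sf_join X) (sf_ast X) G.
Proof.
  destruct HF as [[U0 FU0] [Hup [Hbet Hprime]]].
  split; [|split; [|split]].
  - destruct (proj2_sig U0) as [x Hx]. exists x. unfold G.
    apply (Hup U0); [exact FU0|]. intros P HP. apply (proj1 (Hx P)). exact HP.
  - intros x y Hx Hxy. unfold G in *. apply (Hup (OpO x)); [exact Hx|].
    apply Op_mono; exact Hxy.
  - intros x y Hx Hy. destruct (Hbet _ _ Hx Hy) as [P [Px Py]].
    simpl in Px, Py. unfold Op in Px, Py.
    destruct (proj2_sig P) as [_ [_ [Hast _]]]. exact (Hast x y Px Py).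
  - intros Y HY. unfold G in HY.
    set (Z := fun U : opens (St X) => exists y, Y y /\ proj1_sig U = Op X y).
    assert (FZ : F (opens_join (St X) Z)).
    { apply (Hup _ _ HY). intros P HP. simpl in HP. unfold Op in HP.
      destruct (proj2_sig P) as [_ [_ [_ Hp]]]. destruct (Hp _ HP) as [y [Yy Py]].
      simpl. exists (Op X y). split; [|exact Py].
      exists (OpO y). split; [|reflexivity]. exists y. split; [exact Yy|reflexivity]. }
    destruct (Hprime _ FZ) as [U [[y [Yy e]] FU]].
    exists y. split; [exact Yy|]. unfold G. apply (Hup U); [exact FU|].
    intros P HP. rewrite e in HP. exact HP.
Qed.

Lemma part3 : exists p : St X, forall U, F U <-> nbhd (St X) p U.
Proof.
  exists (exist _ G G_ap). intros U.
  destruct HF as [_ [Hup _]].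
  destruct (proj2_sig U) as [x Hx].
  unfold nbhd. rewrite (Hx _). unfold Op at 1. simpl. unfold G.
  split; intros H; (eapply Hup; [exact H|]); intros P HP; simpl in *.
  - apply (proj1 (Hx P)). exact HP.
  - apply (proj2 (Hx P)). exact HP.
Qed.
End Part3.
End P.

Theorem proposition7p15 : forall X : Semiframe, sober (St X).
Proof.
  intros X. split; [exact (part1 X)|split; [exact (part2 X)|]].
  intros F HF. exact (part3 X F HF).
Qed.
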